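(* Let $P$ be a natural unit interval order. For every finite multiset $\beta$ of elements of $P$, $W_\beta(t)\in(I^P_T)^\perp$. Moreover, $\{W_\beta(t)\}$, as $\beta$ ranges over all finite multisets of elements of $P$, is a $\mathbb{Q}(t)$-basis of $(I^P_T)^\perp\subseteq\mathbb{Q}(t)\otimes\mathcal{U}_P^*$.
   Context: A natural unit interval order is a finite poset $P$ with a total order $<$ on $P$ such that $a<_Pb$ implies $a<b$, and if $a\sim_Pb$, $b\sim_Pc$, $a<_Pc$ then $a<b<c$ (here $\sim_P$ means incomparable or equal). $\mathcal{U}_P=\mathbb{Z}\langle u_a:a\in P\rangle$; $\mathcal{U}_P^*$ is the free module on words in $P$, with pairing $\langle\mathbf{u}_w,v\rangle=\delta_{vw}$ extended $\mathbb{Q}(t)$-bilinearly; $I^\perp$ is the set of $\gamma$ with $\langle z,\gamma\rangle=0$ for all $z\in I$. $I^P_T\subseteq\mathbb{Q}(t)\otimes\mathcal{U}_P$ is the ideal generated by $u_cu_a-u_au_c$ ($a<_Pc$) and $u_bu_a-t\,u_au_b$ ($a<b$, $a\sim_Pb$). For a word $w$, $\mathrm{inv}_P(w)=\#\{(i,j): i<j,\ w_i>w_j,\ w_i\sim_Pw_j\}$. The content of a word is its multiset of letters; $W_\beta(t)=\sum t^{\mathrm{inv}_P(w)}w$ over all words $w$ of content $\beta$. *)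

(* Defs.v *)
From HB Require Import structures.
From mathcomp Require Import all_boot all_order all_algebra.
From mathcomp Require Import fraction finmap.
From mathcomp.multinomials Require Import monalg.

Set Implicit Arguments.
Unset Strict Implicit.
Unset Printing Implicit Defensive.

Import Order.TTheory GRing.Theory Num.Theory.
Local Open Scope ring_scope.

Definition Qt : fieldType := {fraction {poly rat}}.
Definition tvar : Qt := tofrac ('X : {poly rat}).

(* The poset P is {0,...,n-1} =: 'I_n; the total order < of the natural unit
   interval order is the natural order of 'I_n, and the strict partial order
   <_P is the relation ltP. *)

Definition simP (n : nat) (ltP : rel 'I_n) (a b : 'I_n) : bool :=
  (a == b) || (~~ ltP a b && ~~ ltP b a).

Definition nat_unit_interval_order (n : nat) (ltP : rel 'I_n) : Prop :=
  [/\ irreflexive ltP, transitive ltP,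
      (forall a b, ltP a b -> (a < b)%N) &
      (forall a b c, simP ltP a b -> simP ltP b c -> ltP a c ->
         (a < b < c)%N)].

(* Words in P; Q(t) ⊗ U_P = free associative Q(t)-algebra on the u_a,
   realized as the monoid algebra of the free monoid on 'I_n. *)
Definition word (n : nat) := {fmonom 'I_n}.
Definition UP (n : nat) := {malg Qt[word n]}.
(* Q(t) ⊗ U_P^* : free Q(t)-module on words (finitely supported). *)
Definition UPdual (n : nat) := {malg Qt[word n]}.

Definition u (n : nat) (a : 'I_n) : UP n := << FMonom [:: a] >>.

Definition pairing (n : nat) (z : UP n) (g : UPdual n) : Qt :=
  \sum_(w <- (msupp z : {fset word n})) z@_w * g@_w.

Inductive ideal_gen (R : pzRingType) (S : R -> Prop) : R -> Prop :=
| ideal_gen_gen x : S x -> ideal_gen S x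
| ideal_gen_0 : ideal_gen S 0
| ideal_gen_add x y : ideal_gen S x -> ideal_gen S y -> ideal_gen S (x + y)
| ideal_gen_mul a x b : ideal_gen S x -> ideal_gen S (a * x * b).

Definition IT_gens (n : nat) (ltP : rel 'I_n) (z : UP n) : Prop :=
  (exists a c : 'I_n, ltP a c /\ z = u c * u a - u a * u c) \/
  (exists a b : 'I_n, (a < b)%N /\ simP ltP a b /\ z = u b * u a - tvar *: (u a * u b)).

Definition IT (n : nat) (ltP : rel 'I_n) : UP n -> Prop := ideal_gen (IT_gens ltP).

Definition perp (n : nat) (I : UP n -> Prop) (g : UPdual n) : Prop :=
  forall z, I z -> pairing z g = 0.

Fixpoint invP (n : nat) (ltP : rel 'I_n) (w : seq 'I_n) : nat :=
  match w with
  | [::] => 0%N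
  | a :: w' => (count (fun b : 'I_n => (b < a)%N && simP ltP a b) w' + invP ltP w')%N
  end.

Definition multiset (n : nat) := {ffun 'I_n -> nat}.
Definition content (n : nat) (w : seq 'I_n) : multiset n :=
  [ffun a => count_mem a w].

(* W_beta(t) = sum of t^{inv_P(w)} w over all words w of content beta
   (such words have length |beta| = sum_a beta(a)). *)
Definition W (n : nat) (ltP : rel 'I_n) (beta : multiset n) : UPdual n :=
  \sum_(w : (\sum_(a : 'I_n) beta a)%N.-tuple 'I_n | content w == beta)
     (tvar ^+ invP ltP w) *: << FMonom (val w) >>.

(* Main.v *)
Require Import Defs.
From HB Require Import structures.
From mathcomp Require Import all_boot all_order all_algebra.
From mathcomp Require Import fraction finmap.
From mathcomp.multinomials Require Import monalg.
From mathcomp Require Import zify.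
Import GRing.Theory.
Local Open Scope ring_scope.
Set Implicit Arguments.
Unset Strict Implicit.

Lemma fmEq n (s1 s2 : seq 'I_n) : (FMonom s1 == FMonom s2 :> word n) = (s1 == s2).
Proof. by []. Qed.

Lemma malgZr_gen (K : monomType) (R : comRingType) (X Y : {malg R[K]}) (d : R) :
  X * (d *: Y) = d *: (X * Y).
Proof.
apply/malgP => k; rewrite mcoeffZ (mcoeffMlw _ (fsubset_refl _) (msuppZ_le d Y)).
rewrite mcoeffMl mulr_sumr; apply: eq_bigr => k1 _; rewrite mulr_sumr.
apply: eq_bigr => k2 _; by rewrite mcoeffZ mulrnAr mulrCA.
Qed.
Lemma malgZr n (X Y : UP n) (d : Qt) : X * (d *: Y) = d *: (X * Y).
Proof.
exact: malgZr_gen.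
Qed.

Lemma mulUU n (k1 k2 : word n) : (<< k1 >> : UP n) * << k2 >> = << mmul k1 k2 >>.
Proof. by rewrite malgM_def fgmulUU mulr1. Qed.

Lemma U_scale_gen (K : monomType) (R : comRingType) (k : K) (c : R) :
  (<< c *g k >> : {malg R[K]}) = c *: << k >>.
Proof. by apply/malgP => k'; rewrite mcoeffZ !mcoeffU mulr_natr. Qed.
Lemma U_scale n (k : word n) (c : Qt) : (<< c *g k >> : UP n) = c *: << k >>.
Proof. exact: U_scale_gen. Qed.

Lemma pairingE n (z : UP n) (g : UPdual n) :
  pairing z g = \sum_(w <- msupp g) z@_w * g@_w.
Proof.
rewrite /pairing (big_fset_incl _ (fsubsetUl (msupp z) (msupp g))); last first.
  by move=> x _ /mcoeff_outdom ->; rewrite mul0r.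
rewrite [RHS](big_fset_incl _ (fsubsetUr (msupp z) (msupp g))) //.
by move=> x _ /mcoeff_outdom ->; rewrite mulr0.
Qed.
Definition fm n (s : seq 'I_n) : word n := FMonom s.

Lemma pairingD n (z1 z2 : UP n) g : pairing (z1 + z2) g = pairing z1 g + pairing z2 g.
Proof. by rewrite !pairingE -big_split /=; apply: eq_bigr => w _; rewrite mcoeffD mulrDl. Qed.
Lemma pairingZ n (c : Qt) (z : UP n) g : pairing (c *: z) g = c * pairing z g.
Proof. by rewrite !pairingE mulr_sumr; apply: eq_bigr => w _; rewrite mcoeffZ mulrA. Qed.
Lemma pairingN n (z : UP n) g : pairing (- z) g = - pairing z g.
Proof. by rewrite -scaleN1r pairingZ mulN1r. Qed.
Lemma pairingB n (z1 z2 : UP n) g : pairing (z1 - z2) g = pairing z1 g - pairing z2 g.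
Proof. by rewrite pairingD pairingN. Qed.
Lemma pairing0 n (g : UPdual n) : pairing 0 g = 0.
Proof. by rewrite pairingE big1 // => w _; rewrite mcoeff0 mul0r. Qed.
Lemma pairing_sum n (I : Type) (r : seq I) (F : I -> UP n) g :
  pairing (\sum_(i <- r) F i) g = \sum_(i <- r) pairing (F i) g.
Proof.
elim: r => [|i r IH]; first by rewrite !big_nil pairing0.
by rewrite !big_cons pairingD IH.
Qed.
Lemma pairingU n (k : word n) (g : UPdual n) : pairing << k >> g = g@_k.
Proof. by rewrite /pairing msuppU1 big_seq_fset1 mcoeffUU mul1r. Qed.

Lemma fmM3 n (x y : seq 'I_n) (a c : 'I_n) :
  (<< fm x >> : UP n) * (u c * u a) * << fm y >> = << fm (x ++ c :: a :: y) >>.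
Proof.
rewrite /u !mulUU; congr << _ >>; apply: val_inj => /=.
by rewrite !fmM /= -catA.
Qed.
Lemma sum_mul3 (R : pzRingType) (I J : Type) (r : seq I) (s : seq J) (F : I -> R) (G : J -> R) z :
  (\sum_(i <- r) F i) * z * (\sum_(j <- s) G j) = \sum_(i <- r) \sum_(j <- s) F i * z * G j.
Proof. rewrite mulr_suml mulr_suml; apply: eq_bigr => i _; by rewrite mulr_sumr. Qed.

Lemma pairing_mono n (g : UPdual n) (z : UP n) :
  (forall k l, pairing (<< k >> * z * << l >>) g = 0) ->
  forall a b, pairing (a * z * b) g = 0.
Proof.
move=> H a b.
rewrite (monalgE a) (monalgE b) sum_mul3.
rewrite pairing_sum big1 // => k _.
rewrite pairing_sum big1 // => l _.
rewrite (U_scale k) (U_scale l).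
rewrite -scalerAl -scalerAl.
rewrite malgZr.
rewrite pairingZ pairingZ H.
by rewrite mulr0 mulr0.
Qed.
Definition localP n (ltP : rel 'I_n) (g : UPdual n) :=
 (forall (x y : seq 'I_n) (a c : 'I_n), ltP a c -> g@_(fm (x ++ c :: a :: y)) = g@_(fm (x ++ a :: c :: y))) /\
 (forall (x y : seq 'I_n) (a b : 'I_n), (a < b)%N -> simP ltP a b ->
     g@_(fm (x ++ b :: a :: y)) = tvar * g@_(fm (x ++ a :: b :: y))).

Lemma mul3B (R : pzRingType) (k x y l : R) : k * (x - y) * l = k * x * l - k * y * l.
Proof. by rewrite mulrBr mulrBl. Qed.
Lemma mul3D (R : pzRingType) (k x y l : R) : k * (x + y) * l = k * x * l + k * y * l.
Proof. by rewrite mulrDr mulrDl. Qed.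
Lemma mul3A (R : pzRingType) (a' a x b b' : R) : a' * (a * x * b) * b' = (a' * a) * x * (b * b').
Proof. by rewrite !mulrA. Qed.
Lemma mul30 (R : pzRingType) (a b : R) : a * 0 * b = 0.
Proof. by rewrite mulr0 mul0r. Qed.
Lemma mul311 (R : pzRingType) (z : R) : 1 * z * 1 = z.
Proof. by rewrite mulr1 mul1r. Qed.

Lemma fmM3' n (x y : word n) (a c : 'I_n) :
  (<< x >> : UP n) * (u c * u a) * << y >> = << fm (fmonom_val x ++ c :: a :: fmonom_val y) >>.
Proof. by rewrite -(fmK x) -(fmK y) fmM3. Qed.

Lemma mul3B_UP n (k x y l : UP n) : k * (x - y) * l = k * x * l - k * y * l.
Proof. exact: mul3B. Qed.
Lemma pairing_mulB n (k X Y l : UP n) (g : UPdual n) :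
  pairing (k * (X - Y) * l) g = pairing (k * X * l) g - pairing (k * Y * l) g.
Proof. rewrite -pairingB; congr (pairing _ g); exact: mul3B_UP. Qed.
Lemma mul3Z_UP n (k x l : UP n) (c : Qt) : k * (c *: x) * l = c *: (k * x * l).
Proof. by rewrite malgZr -scalerAl. Qed.
Lemma pairing_mulZ n (k X l : UP n) (c : Qt) (g : UPdual n) :
  pairing (k * (c *: X) * l) g = c * pairing (k * X * l) g.
Proof. rewrite -pairingZ; congr (pairing _ g); exact: mul3Z_UP. Qed.
Lemma pair_fm n (g : UPdual n) (x y : word n) (a c : 'I_n) :
  pairing (<< x >> * (u c * u a) * << y >>) g = g@_(fm (fmonom_val x ++ c :: a :: fmonom_val y)).
Proof. by rewrite (fmM3' x y a c) pairingU. Qed.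
Lemma gen1_pair n (g : UPdual n) (x y : word n) (a c : 'I_n) :
  pairing (<< x >> * (u c * u a - u a * u c) * << y >>) g =
  g@_(fm (fmonom_val x ++ c :: a :: fmonom_val y)) - g@_(fm (fmonom_val x ++ a :: c :: fmonom_val y)).
Proof. rewrite pairing_mulB; congr (_ - _); exact: pair_fm. Qed.
Lemma gen2_pair n (g : UPdual n) (x y : word n) (a b : 'I_n) :
  pairing (<< x >> * (u b * u a - tvar *: (u a * u b)) * << y >>) g =
  g@_(fm (fmonom_val x ++ b :: a :: fmonom_val y)) - tvar * g@_(fm (fmonom_val x ++ a :: b :: fmonom_val y)).
Proof. rewrite pairing_mulB; congr (_ - _); first exact: pair_fm. rewrite pairing_mulZ; congr (_ * _); exact: pair_fm. Qed.
Lemma pairing_mulD n (k X Y l : UP n) (g : UPdual n) :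
  pairing (k * (X + Y) * l) g = pairing (k * X * l) g + pairing (k * Y * l) g.
Proof. rewrite -pairingD; congr (pairing _ g); exact: mul3D. Qed.

Lemma add00 (x y : Qt) : x = 0 -> y = 0 -> x + y = 0.
Proof. by move=> -> ->; rewrite addr0. Qed.

Lemma perp_of_local n (ltP : rel 'I_n) (g : UPdual n) :
  localP ltP g -> perp (IT ltP) g.
Proof.
move=> [L1 L2].
suff H : forall z, IT ltP z -> forall a b, pairing (a * z * b) g = 0.
  move=> z /H /(_ 1 1) E.
  exact: (eq_ind _ (fun w => pairing w g = 0) E _ (mul311 z)).
move=> z; elim => {z}.
- move=> z Hz; apply: pairing_mono => k l.
  case: Hz => [[a [c [Hac ->]]] | [a [b [Hab [Hs ->]]]]].
  + by rewrite gen1_pair (L1 _ _ _ _ Hac) subrr.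
  + by rewrite gen2_pair (L2 _ _ _ _ Hab Hs) subrr.
- move=> a b; exact: (eq_ind_r (fun w => pairing w g = 0) (pairing0 g) (mul30 a b)).
- move=> x y _ IHx _ IHy a b; rewrite pairing_mulD.
  by apply: add00; [exact: IHx | exact: IHy].
- move=> a x b _ IH a' b'.
  exact: (eq_ind_r (fun w => pairing w g = 0) (IH (a'*a) (b*b')) (mul3A a' a x b b')).
Qed.

Definition le_ord n : rel 'I_n := fun a b => (a <= b)%N.

Lemma le_ord_trans n : transitive (@le_ord n).
Proof. move=> a b c; exact: leq_trans. Qed.
Lemma le_ord_total n : total (@le_ord n).
Proof. move=> a b; exact: leq_total. Qed.
Lemma le_ord_anti n : antisymmetric (@le_ord n).
Proof. move=> a b H; apply: val_inj; exact: anti_leq. Qed.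

Lemma count_swap (T : Type) (f : pred T) x a b y :
  count f (x ++ b :: a :: y) = count f (x ++ a :: b :: y).
Proof. rewrite !count_cat /=; lia. Qed.

Lemma perm_swap (T : eqType) (x y : seq T) a b : perm_eq (x ++ b :: a :: y) (x ++ a :: b :: y).
Proof. by apply/permP => p; rewrite count_swap. Qed.

Lemma content_swap n (x y : seq 'I_n) a b : content (x ++ b :: a :: y) = content (x ++ a :: b :: y).
Proof. by apply/ffunP => i; rewrite !ffunE count_swap. Qed.

Lemma content_perm n (s1 s2 : seq 'I_n) : perm_eq s1 s2 -> content s1 = content s2.
Proof. by move/permP => H; apply/ffunP => i; rewrite !ffunE H. Qed.

Lemma invP_swap n (ltP : rel 'I_n) x (a b : 'I_n) y :
  (invP ltP (x ++ b :: a :: y) + ((b < a)%N && simP ltP a b))%N =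
  (invP ltP (x ++ a :: b :: y) + ((a < b)%N && simP ltP b a))%N.
Proof.
elim: x => [|c x IH] /=; first lia.
rewrite count_swap; lia.
Qed.

Fixpoint ninv n (s : seq 'I_n) : nat :=
  if s is a :: s' then (count (fun b : 'I_n => (b < a)%N) s' + ninv s')%N else 0%N.

Lemma ninv_swap n x (a b : 'I_n) y :
  (ninv (x ++ b :: a :: y) + (b < a)%N)%N = (ninv (x ++ a :: b :: y) + (a < b)%N)%N.
Proof.
elim: x => [|c x IH] /=; first lia.
rewrite count_swap; lia.
Qed.

Lemma not_sorted_split n (s : seq 'I_n) : ~~ sorted (@le_ord n) s ->
  exists x b a y, s = x ++ b :: a :: y /\ (a < b)%N.
Proof.
elim: s => [|c s IH] //.
case: s IH => [|d s] IH //= /nandP [H|H].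
  by exists [::], c, d, s; split => //; rewrite /le_ord -ltnNge in H.
have [x [b [a [y [E Hab]]]]] := IH H.
by exists (c :: x), b, a, y; rewrite E.
Qed.

Lemma invP_sorted n (ltP : rel 'I_n) (s : seq 'I_n) : sorted (@le_ord n) s -> invP ltP s = 0%N.
Proof.
elim: s => [|a s IH] //= Hp.
have Hall := order_path_min (@le_ord_trans n) Hp.
rewrite IH ?(path_sorted Hp) // addn0.
apply/eqP; rewrite eqn0Ngt -has_count; apply/hasPn => b /(allP Hall).
by rewrite /le_ord leqNgt => /negbTE ->.
Qed.

Lemma sum_count_mem n (s : seq 'I_n) : (\sum_(a : 'I_n) count_mem a s)%N = size s.
Proof.
elim: s => [|b s IH] /=; first by rewrite big1.
rewrite big_split /= IH (bigD1 b) //= eqxx big1 // => a Ha.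
by rewrite eq_sym (negbTE Ha).
Qed.

Definition canon n (beta : multiset n) : seq 'I_n :=
  flatten [seq nseq (beta i) i | i <- enum 'I_n].

Lemma content_canon n (beta : multiset n) : content (canon beta) = beta.
Proof.
apply/ffunP => a; rewrite ffunE count_flatten -map_comp.
rewrite (eq_map (g := fun i => ((i == a) * beta i)%N)); last first.
  by move=> i /=; rewrite count_nseq.
rewrite sumnE big_map big_enum /= (bigD1 a) //= eqxx mul1n big1 ?addn0 // => i Hi.
by rewrite (negbTE Hi).
Qed.

Lemma perm_canon n (s : seq 'I_n) : perm_eq s (canon (content s)).
Proof.
apply/allP => x _ /=; apply/eqP.
by have := congr1 (fun f : multiset n => f x) (content_canon (content s)); rewrite !ffunE.
Qed.

Lemma local_sort n (ltP : rel 'I_n) (g : UPdual n) :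
  nat_unit_interval_order ltP -> localP ltP g ->
  forall s, g@_(fm s) = tvar ^+ invP ltP s * g@_(fm (sort (@le_ord n) s)).
Proof.
move=> [irr tr ltlt _] [L1 L2].
suff: forall k s, (ninv s <= k)%N -> g@_(fm s) = tvar ^+ invP ltP s * g@_(fm (sort (@le_ord n) s)).
  by move=> H s; exact: (H _ s (leqnn _)).
elim => [|k IH] s Hk.
all: have [Hs|Hns] := boolP (sorted (@le_ord n) s).
1,3: by rewrite (sorted_sort (@le_ord_trans n) Hs) (invP_sorted ltP Hs) expr0 mul1r.
all: have [x [b [a [y [E Hab]]]]] := not_sorted_split Hns.
all: have Hn := ninv_swap x a b y; rewrite -E Hab ltnNge (ltnW Hab) /= addn0 in Hn.
1: by lia.
have Hs' : (ninv (x ++ a :: b :: y) <= k)%N by lia.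
have Hsort : sort (@le_ord n) s = sort (@le_ord n) (x ++ a :: b :: y).
  apply/(perm_sortP (@le_ord_total n) (@le_ord_trans n) (@le_ord_anti n)).
  by rewrite E perm_swap.
have Hi := invP_swap ltP x a b y; rewrite -E Hab ltnNge (ltnW Hab) /= addn0 in Hi.
have [Hl|Hnl] := boolP (ltP a b).
  have Hsba : simP ltP b a = false.
    by rewrite /simP Hl andbF orbF; apply/negbTE; rewrite neq_ltn Hab orbT.
  rewrite Hsba /= in Hi.
  have Hi' : invP ltP s = invP ltP (x ++ a :: b :: y) by lia.
  by rewrite Hsort Hi' E (L1 x y a b Hl) (IH _ Hs').
have Hnba : ~~ ltP b a by apply/negP => /ltlt; rewrite ltnNge (ltnW Hab).
have Hsab : simP ltP a b by rewrite /simP Hnl Hnba orbT.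
have Hsba : simP ltP b a by rewrite /simP Hnl Hnba orbT.
rewrite Hsba /= in Hi.
have Hi' : invP ltP s = (invP ltP (x ++ a :: b :: y)).+1 by lia.
by rewrite Hsort Hi' E (L2 x y a b Hab Hsab) (IH _ Hs') exprS mulrA.
Qed.
Lemma W_coef n (ltP : rel 'I_n) (beta : multiset n) (s : seq 'I_n) :
  (W ltP beta)@_(fm s) = if content s == beta then tvar ^+ invP ltP s else 0.
Proof.
rewrite /W raddf_sum /=.
under eq_bigr => w _ do rewrite mcoeffZ mcoeffU1 fmEq.
case: eqP => [Hc|Hc]; last first.
  rewrite big1 // => w /eqP Hw; case: eqP => [Ew|_]; last by rewrite mulr0.
  by case: Hc; rewrite -Ew.
have Hsz : size s == (\sum_(a : 'I_n) beta a)%N.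
  by rewrite -sum_count_mem -Hc; apply/eqP; apply: eq_bigr => a _; rewrite ffunE.
rewrite (bigD1 (Tuple Hsz)) /=; last by rewrite Hc.
rewrite eqxx mulr1 big1 ?addr0 // => w /andP [_ Hw].
case: eqP => [Ew|_]; last by rewrite mulr0.
by case/eqP: Hw; apply: val_inj; rewrite /= Ew.
Qed.

Lemma W_local n (ltP : rel 'I_n) (beta : multiset n) :
  nat_unit_interval_order ltP -> localP ltP (W ltP beta).
Proof.
move=> [irr tr ltlt _]; split.
- move=> x y a c Hac; rewrite !W_coef content_swap.
  case: eqP => // _; congr (_ ^+ _).
  have := invP_swap ltP x a c y.
  have -> : (c < a)%N && simP ltP a c = false by rewrite ltnNge (ltnW (ltlt _ _ Hac)).
  have -> : (a < c)%N && simP ltP c a = false.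
    by rewrite /simP Hac andbF orbF; case: eqP => [->|_]; rewrite ?ltnn ?andbF.
  by rewrite !addn0.
- move=> x y a b Hab Hs; rewrite !W_coef content_swap.
  case: eqP => _; last by rewrite mulr0.
  have := invP_swap ltP x a b y.
  rewrite ltnNge (ltnW Hab) Hab /= addn0.
  have -> : simP ltP b a = simP ltP a b by rewrite /simP eq_sym andbC orbC [_ || (_ == _)]orbC.
  by rewrite Hs addn1 => ->; rewrite exprS.
Qed.
Lemma local_of_perp n (ltP : rel 'I_n) (g : UPdual n) :
  perp (IT ltP) g -> localP ltP g.
Proof.
move=> Hg; split.
- move=> x y a c Hac.
  have H1 : IT ltP (<< fm x >> * (u c * u a - u a * u c) * << fm y >>).
    by apply: ideal_gen_mul; apply: ideal_gen_gen; left; exists a, c.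
  have := Hg _ H1; rewrite gen1_pair /=.
  by move/eqP; rewrite subr_eq0 => /eqP.
- move=> x y a b Hab Hs.
  have H1 : IT ltP (<< fm x >> * (u b * u a - tvar *: (u a * u b)) * << fm y >>).
    by apply: ideal_gen_mul; apply: ideal_gen_gen; right; exists a, b.
  have := Hg _ H1; rewrite gen2_pair /=.
  by move/eqP; rewrite subr_eq0 => /eqP.
Qed.

Lemma tvar_neq0 : tvar != 0.
Proof. by rewrite /tvar tofrac_eq0 polyX_eq0. Qed.

Lemma sumW_coef n (ltP : rel 'I_n) (s : seq (multiset n)) (c : multiset n -> Qt) (w : seq 'I_n) :
  (\sum_(beta <- s) c beta *: W ltP beta)@_(fm w) =
  \sum_(beta <- s) c beta * (if content w == beta then tvar ^+ invP ltP w else 0).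
Proof.
rewrite raddf_sum /=; apply: eq_bigr => beta _.
by rewrite mcoeffZ W_coef.
Qed.

Theorem mainTheorem6 (n : nat) (ltP : rel 'I_n) :
  nat_unit_interval_order ltP ->
  (* each W_beta(t) lies in (I^P_T)^perp *)
  (forall beta : multiset n, perp (IT ltP) (W ltP beta)) /\
  (* the family (W_beta)_beta is Q(t)-linearly independent *)
  (forall (s : seq (multiset n)) (c : multiset n -> Qt),
     uniq s -> \sum_(beta <- s) c beta *: W ltP beta = 0 ->
     forall beta, beta \in s -> c beta = 0) /\
  (* and spans (I^P_T)^perp *)
  (forall g : UPdual n, perp (IT ltP) g ->
     exists (s : seq (multiset n)) (c : multiset n -> Qt),
       g = \sum_(beta <- s) c beta *: W ltP beta).
Proof.
move=> Hn; split; [|split].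
- by move=> beta; apply: perp_of_local; apply: W_local.
- move=> s c Hu Hsum beta Hb.
  have := congr1 (mcoeff (fm (canon beta))) Hsum.
  rewrite sumW_coef mcoeff0 content_canon (bigD1_seq beta Hb Hu) /= eqxx.
  rewrite big1 ?addr0; last by move=> b Hb'; rewrite eq_sym (negbTE Hb') mulr0.
  by move/eqP; rewrite mulf_eq0 expf_eq0 (negbTE tvar_neq0) andbF orbF => /eqP.
- move=> g Hg.
  have Hl := local_of_perp Hg.
  pose s := undup [seq content (fmonom_val w) | w <- (msupp g : seq (word n))].
  exists s, (fun beta => g@_(fm (sort (@le_ord n) (canon beta)))).
  apply/malgP => k.
  have Ek : k = fm (fmonom_val k) by rewrite /fm fmK.
  rewrite Ek sumW_coef.
  have [Hin|Hnin] := boolP (content (fmonom_val k) \in s).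
    rewrite (bigD1_seq _ Hin (undup_uniq _)) /= eqxx big1 ?addr0; last first.
      by move=> b Hb; rewrite eq_sym (negbTE Hb) mulr0.
    rewrite [LHS](local_sort Hn Hl) [RHS]mulrC; congr (_ * _); congr (g@_(fm _)).
    apply/(perm_sortP (@le_ord_total n) (@le_ord_trans n) (@le_ord_anti n)).
    exact: perm_canon.
  rewrite big1_seq; last first.
    move=> b /andP [_ Hb]; case: eqP => [E|_]; last by rewrite mulr0.
    by rewrite E Hb in Hnin.
  rewrite -Ek; apply: mcoeff_outdom; apply: contra Hnin => Hk.
  by rewrite mem_undup; apply/mapP; exists k.
Qed.
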